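(* Let $\Psi_1 = 1$, and for each integer $k \geq 2$ let $\Psi_k = \frac{1 + \Psi_{k_1} + \Psi_{k_2}}{2}$, where for each $k$ the pair of positive integers $k_1, k_2$ with $k_1 + k_2 = k$ may be chosen arbitrarily. Then for every integer $k \geq 2$ there exist positive constants $C_k$ and $D_k$ (depending only on $k$ and the chosen sequence $(\Psi_j)$) such that for every real $M > 0$ and every finite set $A$ of positive real numbers with $|AA| \leq M|A|$, \[ |kA| \geq \frac{C_k}{M^{D_k}} \cdot |A|^{\Psi_k}. \] In particular, for every integer $k \geq 2$ there exist positive constants $C_k, D_k$ such that for every real $M>0$ and every finite set $A$ of positive real numbers with $|AA| \leq M|A|$, \[ |kA| \geq \frac{C_k}{M^{D_k}} \cdot |A|^{\log_4 (2k)}. \]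
   Context: For a finite set $A$ of real numbers, $AA = \{ab : a, b \in A\}$ is the product set, and $kA = \{a_1 + a_2 + \cdots + a_k : a_1, \dots, a_k \in A\}$ is the $k$-fold sum set. $|X|$ denotes the cardinality of a finite set $X$. *)

(* Defs.v *)
From HB Require Import structures.
From mathcomp Require Import all_boot all_order all_algebra.
From mathcomp Require Import finmap.
From mathcomp Require Import all_classical all_reals all_analysis.
Set Implicit Arguments. Unset Strict Implicit. Unset Printing Implicit Defensive.
Import Order.TTheory GRing.Theory Num.Theory.
Local Open Scope ring_scope.
Local Open Scope fset_scope.

Definition prodset (R : realType) (A : {fset R}) : {fset R} :=
  [fset (a * b)%R | a in A, b in A].

Fixpoint sumset (R : realType) (k : nat) (A : {fset R}) : {fset R} :=
  match k with
  | 0 => [fset (0 : R)]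
  | k'.+1 => [fset (x + a)%R | x in sumset k' A, a in A]
  end.

Definition admissible_Psi (R : realType) (Psi : nat -> R) : Prop :=
  Psi 1%N = 1 /\
  forall k : nat, (2 <= k)%N ->
    exists k1 k2 : nat, [/\ (0 < k1)%N, (0 < k2)%N, (k1 + k2 = k)%N &
      Psi k = (1 + Psi k1 + Psi k2) / 2].

(* Main.v *)
Require Import Defs.
From HB Require Import structures.
From mathcomp Require Import all_boot all_order all_algebra.
From mathcomp Require Import finmap.
From mathcomp Require Import all_classical all_reals all_analysis.
From mathcomp Require Import ring lra zify.
Import Order.TTheory GRing.Theory Num.Theory.
Local Open Scope fset_scope.
Local Open Scope ring_scope.

Section L1.
Variable R : realType.

Lemma card_imfset2_inj (T : choiceType) (f : R -> R -> T) (B C : {fset R}) :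
  (forall b c b' c', b \in B -> c \in C -> b' \in B -> c' \in C ->
    f b c = f b' c' -> b = b' /\ c = c') ->
  #|` [fset f b c | b in B, c in C]| = (#|` B| * #|` C|)%N.
Proof.
move=> finj; rewrite Imfset.imfset2E /= size_seq_fset undup_id ?size_allpairs //.
apply: allpairs_uniq; rewrite ?fset_uniq //.
move=> [b c] [b' c'] /allpairsP [[x y] /= [xB yC [-> ->]]].
move=> /allpairsP [[x' y'] /= [xB' yC' [-> ->]]] /= e.
by have [-> ->] := finj _ _ _ _ xB yC xB' yC' e.
Qed.

Lemma card_imfset2_le (T : choiceType) (f : R -> R -> T) (B C : {fset R}) :
  (#|` [fset f b c | b in B, c in C]| <= #|` B| * #|` C|)%N.
Proof.
rewrite Imfset.imfset2E /= size_seq_fset (leq_trans (size_undup _)) //.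
by rewrite size_allpairs.
Qed.

End L1.

Section L2.
Variable R : realType.
Implicit Types (A B : {fset R}).

Lemma sumsetSP k A (z : R) :
  reflect (exists2 x, x \in sumset k A & exists2 a, a \in A & z = x + a)
          (z \in sumset k.+1 A).
Proof.
apply: (iffP idP) => [/imfset2P [x xi [a ai ->]] | [x xi [a ai ->]]].
  by exists x => //; exists a.
by apply/imfset2P; exists x => //; exists a.
Qed.

Lemma sumset0P A (z : R) : (z \in sumset 0 A) = (z == 0).
Proof. by rewrite /= inE. Qed.

Lemma sumset_ge0 k A : (forall a, a \in A -> 0 < a) ->
  forall x, x \in sumset k A -> 0 <= x.
Proof.
move=> Ap; elim: k => [|k IH] x; first by rewrite sumset0P => /eqP ->.
by case/sumsetSP => y /IH y0 [a /Ap a0 ->]; rewrite addr_ge0 // ltW.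
Qed.

Lemma sumset_gt0 k A : (forall a, a \in A -> 0 < a) ->
  forall x, x \in sumset k.+1 A -> 0 < x.
Proof.
move=> Ap x /sumsetSP [y /(sumset_ge0 _ _ Ap) y0 [a /Ap a0 ->]].
by rewrite ltr_wpDl.
Qed.

Lemma sumset_mono k B A : B `<=` A -> forall x, x \in sumset k B -> x \in sumset k A.
Proof.
move=> BA; elim: k => [|k IH] x //.
case/sumsetSP => y /IH yA [a aB ->]; apply/sumsetSP; exists y => //.
by exists a => //; apply: (fsubsetP BA).
Qed.

Lemma sumset_scale k B A l : (forall b, b \in B -> l * b \in A) ->
  forall x, x \in sumset k B -> l * x \in sumset k A.
Proof.
move=> BA; elim: k => [|k IH] x.
  by rewrite !sumset0P => /eqP ->; rewrite mulr0.
case/sumsetSP => y /IH yA [a /BA aB ->]; apply/sumsetSP; exists (l * y) => //.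
by exists (l * a) => //; rewrite mulrDr.
Qed.

Lemma sumset_add k1 k2 A x y : x \in sumset k1 A -> y \in sumset k2 A ->
  x + y \in sumset (k1 + k2) A.
Proof.
move=> xA; elim: k2 y => [|k IH] y.
  by rewrite sumset0P => /eqP ->; rewrite addr0 addn0.
case/sumsetSP => z /IH zA [a aA ->]; rewrite addnS; apply/sumsetSP.
by exists (x + z) => //; exists a => //; rewrite addrA.
Qed.

Lemma sumset1 A : sumset 1 A = A.
Proof.
apply/fsetP => z; apply/sumsetSP/idP => [[x] | zA].
  by rewrite sumset0P => /eqP -> [a aA ->]; rewrite add0r.
by exists 0; rewrite ?sumset0P //; exists z; rewrite ?add0r.
Qed.

Lemma sumset_card_gt0 k A : (0 < #|` A|)%N -> (0 < #|` sumset k A|)%N.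
Proof.
rewrite !cardfs_gt0 => /fset0Pn [a aA].
elim: k => [|k /fset0Pn [x xk]]; apply/fset0Pn.
  by exists 0; rewrite sumset0P.
by exists (x + a); apply/sumsetSP; exists x => //; exists a.
Qed.

Lemma prodsetP A (z : R) :
  reflect (exists2 a, a \in A & exists2 b, b \in A & z = a * b) (z \in prodset A).
Proof.
apply: (iffP idP) => [/imfset2P [x xi [a ai ->]] | [x xi [a ai ->]]].
  by exists x => //; exists a.
by apply/imfset2P; exists x => //; exists a.
Qed.

Lemma prodset_mono B A : B `<=` A -> prodset B `<=` prodset A.
Proof.
move=> BA; apply/fsubsetP => z /prodsetP [a aB [b bB ->]].
by apply/prodsetP; exists a; [apply: (fsubsetP BA)|exists b => //; apply: (fsubsetP BA)].
Qed.

Lemma prodset_card A : (forall a, a \in A -> 0 < a) -> (#|` A| <= #|` prodset A|)%N.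
Proof.
move=> Ap; have [->|/fset0Pn [a0 a0A]] := eqVneq A fset0; first by rewrite cardfs0.
have sub : [fset a0 * b | b in A] `<=` prodset A.
  apply/fsubsetP => z /imfsetP [b bA ->]; by apply/prodsetP; exists a0 => //; exists b.
apply: leq_trans (fsubset_leq_card sub); rewrite card_in_imfset //.
by move=> x y _ _ /= /mulfI; apply; rewrite gt_eqF ?Ap.
Qed.

End L2.
Arguments prodset_card {R A}.

Section L3.
Variable R : realType.
Variables (B C : R -> {fset R}).
Hypothesis Bp : forall x b, b \in B x -> 0 < b.
Hypothesis Cp : forall x c, c \in C x -> 0 < c.

Definition pts (x y : R) : {fset R * R} :=
  [fset ((b + c)%R, (x * b + y * c)%R) | b in B x, c in C y].

Fixpoint Sg (s : seq R) : {fset R * R} :=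
  match s with
  | x :: t => match t with y :: _ => pts x y `|` Sg t | [::] => fset0 end
  | [::] => fset0
  end.

Fixpoint psum (s : seq R) : nat :=
  match s with
  | x :: t => match t with y :: _ => (#|` B x| * #|` C y| + psum t)%N | [::] => 0%N end
  | [::] => 0%N
  end.

Lemma ptsP x y p : x < y -> p \in pts x y -> [/\ 0 < p.1, x * p.1 < p.2 & p.2 < y * p.1].
Proof.
move=> xy /imfset2P [b /Bp b0 [c /Cp c0 ->]] /=; split; first by lra.
  by nra.
by nra.
Qed.

Lemma pts_card x y : x < y -> #|` pts x y| = (#|` B x| * #|` C y|)%N.
Proof.
move=> xy; apply: card_imfset2_inj => b c b' c' _ _ _ _ [e1 e2].
have h : (x - y) * (b - b') = (x*b + y*c) - (x*b' + y*c') - y * ((b + c) - (b' + c')).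
  by ring.
move: h; rewrite e1 e2 !subrr mulr0 subr0 => /eqP; rewrite mulf_eq0 subr_eq0.
rewrite lt_eqF //= subr_eq0 => /eqP eb; split => //.
by move: e1; rewrite eb => /addrI.
Qed.

Lemma Sg_inv x t : path <%R x t -> forall p, p \in Sg (x :: t) -> 0 < p.1 /\ x * p.1 < p.2.
Proof.
elim: t x => [|y t IH] x //.
have -> : Sg [:: x, y & t] = pts x y `|` Sg (y :: t) by [].
rewrite /= => /andP [xy pt] p; rewrite in_fsetU => /orP [/(ptsP _ _ _ xy) [] //|].
move=> /(IH _ pt) [p1 p2]; split => //; apply: lt_trans p2.
by rewrite ltr_pM2r.
Qed.

Lemma Sg_card x t : path <%R x t -> #|` Sg (x :: t)| = psum (x :: t).
Proof.
elim: t x => [|y t IH] x //.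
have -> : Sg [:: x, y & t] = pts x y `|` Sg (y :: t) by [].
have -> : psum [:: x, y & t] = (#|` B x| * #|` C y| + psum (y :: t))%N by [].
rewrite /= => /andP [xy pt].
have dis : pts x y `&` Sg (y :: t) = fset0.
  apply/fsetP => p; rewrite in_fsetI in_fset0; apply/negP => /andP [h1 h2].
  have [_ _ a] := ptsP _ _ _ xy h1; have [_ b] := Sg_inv _ _ pt _ h2.
  by move: (lt_trans a b); rewrite ltxx.
have := cardfsUI (pts x y) (Sg (y :: t)); rewrite dis cardfs0 addn0 => ->.
by rewrite pts_card // (IH _ pt).
Qed.

Lemma Sg_sub (X : {fset R}) s :
  (forall x y b c, x \in s -> y \in s -> b \in B x -> c \in C y ->
     b + c \in X /\ x * b + y * c \in X) -> Sg s `<=` X `*` X.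
Proof.
elim: s => [|x t IH] H; first by apply: fsub0set.
case: t IH H => [|y t] IH H; first by apply: fsub0set.
have -> : Sg [:: x, y & t] = pts x y `|` Sg (y :: t) by [].
rewrite fsubUset; apply/andP; split.
  apply/fsubsetP => p /imfset2P [b bB [c cC ->]]; rewrite in_fsetM /=.
  have yin : y \in [:: x, y & t] by rewrite !inE eqxx orbT.
  by have [-> ->] := H x y b c (mem_head _ _) yin bB cC.
apply: IH => x' y' b c xs ys; apply: H; rewrite inE ?xs ?ys orbT //.
Qed.

Lemma psum_ge (L1 L2 : R) s : 0 <= L1 -> 0 <= L2 ->
  (forall x, x \in s -> L1 <= (#|` B x|)%:R /\ L2 <= (#|` C x|)%:R) ->
  (size s).-1%:R * (L1 * L2) <= (psum s)%:R.
Proof.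
move=> L10 L20; elim: s => [|x t IH] //=; first by rewrite mul0r.
case: t IH => [|y t] IH H /=; first by rewrite mul0r.
have [hx _] := H x (mem_head _ _).
have yin : y \in [:: x, y & t] by rewrite !inE eqxx orbT.
have [_ hy] := H y yin.
have := IH (fun z (zt : z \in y :: t) => H z (mem_behead (s := [:: x, y & t]) zt)) => /= IH'.
rewrite natrD natrM -addn1 natrD mulrDl mul1r addrC lerD //.
by apply: ler_pM.
Qed.

End L3.
Arguments Sg {R}.
Arguments psum {R}.
Arguments Sg_card {R B C}.
Arguments Sg_sub {R B C X s}.
Arguments psum_ge {R B C L1 L2 s}.

Section L4.
Variable R : realType.
Implicit Types (A B : {fset R}).

Definition Qs A : {fset R} := [fset (b / a)%R | a in A, b in A].
Definition Aq A (q : R) : {fset R} := [fset a in A | (q * a)%R \in A].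

Lemma card_fsetM_le A B : (#|` A `*` B| <= #|` A| * #|` B|)%N.
Proof.
rewrite /fsetM Imfset.imfset2E /= size_seq_fset (leq_trans (size_undup _)) //.
by rewrite size_allpairs.
Qed.

Lemma QsP A q : reflect (exists2 a, a \in A & exists2 b, b \in A & q = b / a) (q \in Qs A).
Proof.
apply: (iffP idP) => [/imfset2P [x xi [a ai ->]] | [x xi [a ai ->]]].
  by exists x => //; exists a.
by apply/imfset2P; exists x => //; exists a.
Qed.

Lemma ruzsa A : (forall a, a \in A -> 0 < a) ->
  (#|` Qs A| * #|` A| <= #|` prodset A| ^ 2)%N.
Proof.
move=> Ap.
have [rep repP] : {rep : R -> R * R & forall q, q \in Qs A ->
    [/\ (rep q).1 \in A, (rep q).2 \in A & q = (rep q).2 / (rep q).1]}.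
  apply: (choice (P := fun q (p : R * R) => q \in Qs A ->
    [/\ p.1 \in A, p.2 \in A & q = p.2 / p.1])) => q; case: (boolP (q \in Qs A)) => [/QsP [a aA [b bA ->]]|_].
    by exists (a, b).
  by exists (0, 0).
pose I := [fset (((rep q).1 * c)%R, ((rep q).2 * c)%R) | q in Qs A, c in A].
have -> : (#|` Qs A| * #|` A| = #|` I|)%N.
  symmetry; rewrite /I card_imfset2_inj // => q c q' c' qQ cA q'Q c'A [e1 e2].
  have [a1 b1 qe] := repP q qQ; have [a1' b1' qe'] := repP q' q'Q.
  have a0 := Ap _ a1; have a0' := Ap _ a1'; have c0 := Ap _ cA; have c0' := Ap _ c'A.
  have eq : q = q'.
    have h (x y z : R) : x != 0 -> z != 0 -> y / x = (y * z) / (x * z).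
      by move=> x0 z0; field; rewrite x0 z0.
    rewrite qe qe' (h _ _ c) ?gt_eqF // (h _ ((rep q').2) c') ?gt_eqF //.
    by rewrite e1 e2.
  split => //; move: e1; rewrite -eq => /mulfI; apply; rewrite gt_eqF //.
have sub : I `<=` prodset A `*` prodset A.
  apply/fsubsetP => p /imfset2P [q qQ [c cA ->]]; rewrite in_fsetM /=.
  have [a1 b1 _] := repP q qQ.
  by apply/andP; split; apply/prodsetP; [exists (rep q).1 | exists (rep q).2] => //; exists c.
by rewrite (leq_trans (fsubset_leq_card sub)) // (leq_trans (card_fsetM_le _ _)).
Qed.

Lemma card_sep A (P : pred R) : #|` [fset a in A | P a]| = (\sum_(a <- A) P a)%N.
Proof.
by rewrite card_fset_sum1 -big_fset_condE big_mkcond /=; apply: eq_bigr => i _; case: (P i).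
Qed.

Lemma mass A : (forall a, a \in A -> 0 < a) ->
  (#|` A| ^ 2 <= \sum_(q <- Qs A) #|` Aq A q|)%N.
Proof.
move=> Ap.
under eq_bigr do rewrite /Aq card_sep.
rewrite exchange_big /= expnS expn1 card_fset_sum1 big_distrl /=.
rewrite big_seq_cond [X in (_ <= X)%N]big_seq_cond; apply: leq_sum => a /andP [aA _].
rewrite mul1n -?card_fset_sum1.
rewrite -(card_sep _ (fun q => q * a \in A)).
have sub : [fset b / a | b in A] `<=` [fset q in Qs A | q * a \in A].
  apply/fsubsetP => q /imfsetP [b bA ->]; rewrite !inE /=; apply/andP; split.
    by apply/QsP; exists a => //; exists b.
  by rewrite mulfVK ?gt_eqF ?Ap.
apply: leq_trans (fsubset_leq_card sub); rewrite card_in_imfset //=.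
move=> x y _ _ /= /mulIf; apply; rewrite invr_eq0 gt_eqF ?Ap //.
Qed.

End L4.
Arguments Qs {R}.
Arguments Aq {R}.
Arguments ruzsa {R A}.
Arguments mass {R A}.

Section L5.
Variable R : realType.
Implicit Types (A B : {fset R}).

Definition Rich A (t : R) := [fset q in Qs A | t <= (#|` Aq A q|)%:R].

Lemma sum_const_fset A (c : R) : \sum_(q <- A) c = (#|` A|)%:R * c.
Proof.
by rewrite card_fset_sum1 natr_sum mulr_suml; apply: eq_bigr => i _; rewrite mul1r.
Qed.

Lemma rich_count A (M : R) : (forall a, a \in A -> 0 < a) -> 0 < M ->
  (#|` prodset A|)%:R <= M * (#|` A|)%:R -> (0 < #|` A|)%N ->
  ((#|` A|)%:R / 2 : R) <= (#|` Rich A ((#|` A|)%:R / (2 * M ^+ 2))|)%:R.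
Proof.
move=> Ap M0 hP nA.
set N := (#|` A|)%:R; set t := N / (2 * M ^+ 2).
have N0 : 0 < N by rewrite ltr0n.
have hQ : (#|` Qs A|)%:R <= M ^+ 2 * N.
  have := ruzsa Ap; rewrite -(ler_nat R) natrM natrX => h.
  have h2 : (#|` prodset A|)%:R ^+ 2 <= (M * N) ^+ 2.
    by rewrite ler_sqr ?nnegrE ?ler0n //; apply: mulr_ge0 => //; apply: ltW.
  have := le_trans h h2; rewrite exprMn expr2 mulrA ler_pM2r //.
have hm := mass Ap; rewrite -(ler_nat R) natrX natr_sum in hm.
have key : \sum_(q <- Qs A) (#|` Aq A q|)%:R <=
    \sum_(q <- Qs A) ((nat_of_bool (t <= (#|` Aq A q|)%:R))%:R * N + t).
  rewrite big_seq_cond [X in _ <= X]big_seq_cond; apply: ler_sum => q _.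
  have hq : (#|` Aq A q|)%:R <= N by rewrite ler_nat fsubset_leq_card // fset_sub.
  have t0 : 0 < t by rewrite divr_gt0 // mulr_gt0 // exprn_gt0.
  case: (lerP t (#|` Aq A q|)%:R) => h /=.
    by rewrite mul1r; lra.
  by rewrite mul0r add0r ltW.
have e : \sum_(i <- Qs A) ((nat_of_bool (t <= (#|` Aq A i|)%:R))%:R : R) =
    (#|` Rich A t|)%:R by rewrite /Rich card_sep natr_sum.
rewrite big_split /= -mulr_suml e sum_const_fset in key.
have := le_trans hm key.
have : (#|` Qs A|)%:R * t <= N ^+ 2 / 2.
  rewrite /t; apply: le_trans (ler_wpM2r _ hQ) _.
    by rewrite divr_ge0 ?ler0n // mulr_ge0 // exprn_ge0 // ltW.
  rewrite le_eqVlt; apply/orP; left; apply/eqP; field.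
  by rewrite gt_eqF // exprn_gt0.
set r := (#|` Rich A t|)%:R => h1 h2.
have : N ^+ 2 / 2 <= r * N by lra.
rewrite expr2 mulrAC ler_pM2r //.
Qed.

End L5.
Arguments rich_count {R A M}.
Arguments Rich {R}.

Ltac pos := rewrite ?posrE; repeat (match goal with
  | |- is_true (0 < _ * _) => apply: mulr_gt0
  | |- is_true (0 < _ ^-1) => rewrite invr_gt0
  | |- is_true (0 < _ `^ _) => apply: powR_gt0
  | |- is_true (0 < _ ^+ _) => apply: exprn_gt0
  end); try done; try lra.

Section L6.
Variable R : realType.

Lemma ident (n M C1 C2 p1 p2 D1 D2 : R) : 0 < n -> 0 < M -> 0 < C1 -> 0 < C2 ->
  M `^ (2 * (p1 + p2) + 3 * (D1 + D2)) *
   (n / 4 * ((C1 * (n / (2 * M ^+ 2)) `^ p1 / (2 * M ^+ 3) `^ D1) *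
             (C2 * (n / (2 * M ^+ 2)) `^ p2 / (2 * M ^+ 3) `^ D2)))
  = C1 * C2 / (4 * 2 `^ (p1 + p2) * 2 `^ (D1 + D2)) * n `^ (1 + p1 + p2).
Proof.
move=> n0 M0 c1 c2.
have t0 : 0 < n / (2 * M ^+ 2) by rewrite divr_gt0 // mulr_gt0 // exprn_gt0.
have m3 : 0 < 2 * M ^+ 3 by rewrite mulr_gt0 // exprn_gt0.
have P (x : R) : 0 < x -> x \is Num.pos by rewrite posrE.
have pw (a x : R) : 0 < a -> 0 < a `^ x by move=> a0; apply: powR_gt0.
apply: ln_inj; [pos|pos|].
have e4 : (4 : R) = 2 * 2 by lra.
rewrite e4.
repeat (first [rewrite lnM; [|by pos|by pos] | rewrite lnV; [|by pos]
   | rewrite ln_powR | rewrite lnXn; [|by pos]]).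
ring.
Qed.

End L6.

Section L7.
Variable R : realType.
Implicit Types (A B : {fset R}).

Definition lowb (p : R) (k : nat) (C D : R) := forall (M : R) (A : {fset R}), 0 < M ->
  (forall a, a \in A -> 0 < a) -> (#|` prodset A|)%:R <= M * (#|` A|)%:R ->
  C * (#|` A|)%:R `^ p <= M `^ D * (#|` sumset k A|)%:R.

Lemma M_ge1 A (M : R) : (forall a, a \in A -> 0 < a) -> (0 < #|` A|)%N ->
  (#|` prodset A|)%:R <= M * (#|` A|)%:R -> 1 <= M.
Proof.
move=> Ap nA h; have := prodset_card Ap; rewrite -(ler_nat R) => h2.
have nA' : 0 < (#|` A|)%:R :> R by rewrite ltr0n.
by have := le_trans h2 h; rewrite -{1}[X in X <= _]mul1r ler_pM2r.
Qed.

Lemma main_ineq k1 k2 (p1 p2 C1 C2 D1 D2 M : R) (A : {fset R}) :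
  (0 < k1)%N -> (0 < k2)%N -> 0 <= p1 -> 0 <= p2 -> 0 < C1 -> 0 < C2 ->
  lowb p1 k1 C1 D1 -> lowb p2 k2 C2 D2 ->
  0 < M -> (forall a, a \in A -> 0 < a) ->
  (#|` prodset A|)%:R <= M * (#|` A|)%:R -> (4 : R) <= (#|` A|)%:R ->
  C1 * C2 / (4 * 2 `^ (p1 + p2) * 2 `^ (D1 + D2)) * (#|` A|)%:R `^ (1 + p1 + p2)
  <= M `^ (2 * (p1 + p2) + 3 * (D1 + D2)) * (#|` sumset (k1 + k2) A|)%:R ^+ 2.
Proof.
move=> k10 k20 p10 p20 C10 C20 IH1 IH2 M0 Ap hP n4.
set n := (#|` A|)%:R.
have n0 : 0 < n by lra.
have nA : (0 < #|` A|)%N by rewrite -(ltr0n R).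
set t := n / (2 * M ^+ 2).
have t0 : 0 < t by rewrite divr_gt0 // mulr_gt0 // exprn_gt0.
have m3 : 0 < 2 * M ^+ 3 by rewrite mulr_gt0 // exprn_gt0.
set L1 := C1 * t `^ p1 / (2 * M ^+ 3) `^ D1.
set L2 := C2 * t `^ p2 / (2 * M ^+ 3) `^ D2.
have L10 : 0 <= L1 by apply/ltW; rewrite divr_gt0 ?mulr_gt0 ?powR_gt0.
have L20 : 0 <= L2 by apply/ltW; rewrite divr_gt0 ?mulr_gt0 ?powR_gt0.
rewrite -(ident _ _ _ _ _ p1 p2 D1 D2 n0 M0 C10 C20) -/t -/L1 -/L2.
rewrite ler_wpM2l ?powR_ge0 //.
set Rc := Rich A t.
set s := sort <=%R Rc.
pose B q := sumset k1 (Aq A q).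
pose Cc q := sumset k2 (Aq A q).
have AqA q : Aq A q `<=` A by apply: fset_sub.
have Aqp q a : a \in Aq A q -> 0 < a by move=> /(fsubsetP (AqA q)) /Ap.
have Aqs q a : a \in Aq A q -> q * a \in A by rewrite !inE => /andP [].
have Bp x b : b \in B x -> 0 < b.
  by rewrite /B -(prednK k10); apply: sumset_gt0; apply: Aqp.
have Cp x b : b \in Cc x -> 0 < b.
  by rewrite /Cc -(prednK k20); apply: sumset_gt0; apply: Aqp.
have hL : forall x, x \in s -> L1 <= (#|` B x|)%:R /\ L2 <= (#|` Cc x|)%:R.
  move=> x; rewrite mem_sort => /imfsetP [q /andP [qQ /= tq] ->] {x}.
  move: tq; set Ax := Aq A q => tq.
  have hPx : (#|` prodset Ax|)%:R <= (2 * M ^+ 3) * (#|` Ax|)%:R.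
    apply: le_trans _ (le_trans hP _).
      by rewrite ler_nat; apply/fsubset_leq_card/prodset_mono/AqA.
    have : n <= (2 * M ^+ 2) * (#|` Ax|)%:R.
      by rewrite -ler_pdivrMl ?mulr_gt0 ?exprn_gt0 // mulrC.
    move=> h; have := ler_wpM2l (ltW M0) h.
    move=> h'; apply: (le_trans h'); rewrite le_eqVlt; apply/orP; left.
    by apply/eqP; rewrite !exprS expr0; ring.
  have tp (p : R) : 0 <= p -> t `^ p <= (#|` Ax|)%:R `^ p.
    by move=> p0; apply: ge0_ler_powR; rewrite ?nnegrE ?ler0n ?(ltW t0).
  split.
    have := IH1 _ Ax m3 (Aqp q) hPx.
    move=> h; rewrite /L1 ler_pdivrMr ?powR_gt0 // [X in _ <= X]mulrC.
    by apply: le_trans h; rewrite ler_wpM2l ?(ltW C10) ?tp.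
  have := IH2 _ Ax m3 (Aqp q) hPx.
  move=> h; rewrite /L2 ler_pdivrMr ?powR_gt0 // [X in _ <= X]mulrC.
  by apply: le_trans h; rewrite ler_wpM2l ?(ltW C20) ?tp.
have hps := psum_ge L10 L20 hL.
have hsz : n / 4 <= (size s).-1%:R.
  have := rich_count Ap M0 hP nA; rewrite -/n -/t -/Rc => h.
  rewrite size_sort; have hm : (0 < size Rc)%N.
    by rewrite -(ltr0n R); apply: lt_le_trans h; lra.
  have em : (#|` Rc|)%:R = ((#|` Rc|).-1)%:R + 1 :> R by rewrite natr1 prednK.
  rewrite em in h; lra.
apply: le_trans (ler_wpM2r _ hsz) _; first by apply: mulr_ge0.
apply: le_trans hps _.
have ss : sorted <%R s.
  by rewrite lt_sorted_uniq_le sort_uniq fset_uniq sort_sorted //; apply: le_total.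
have sub : Sg B Cc s `<=` sumset (k1 + k2) A `*` sumset (k1 + k2) A.
  apply: Sg_sub => x y b c _ _ bB cC; split.
    by apply: sumset_add; [apply: (sumset_mono _ _ _ _ (AqA x) _ bB)|
      apply: (sumset_mono _ _ _ _ (AqA y) _ cC)].
  by apply: sumset_add; [apply: (sumset_scale _ _ _ _ _ (Aqs x) _ bB)|
      apply: (sumset_scale _ _ _ _ _ (Aqs y) _ cC)].
have hc : psum B Cc s = #|` Sg B Cc s|.
  move: ss {sub}; rewrite /s; case: (sort _ _) => [|x t'] // ss.
  by rewrite Sg_card.
rewrite hc expr2 -natrM ler_nat (leq_trans (fsubset_leq_card sub)) //.
exact: card_fsetM_le.
Qed.

End L7.
Arguments lowb {R}.
Arguments M_ge1 {R A M}.
Arguments main_ineq {R k1 k2 p1 p2 C1 C2 D1 D2 M A}.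

Section L8.
Variable R : realType.

Lemma sqpow (a x : R) : 0 <= a -> (a `^ x) ^+ 2 = a `^ (x * 2).
Proof. by move=> a0; rewrite -(powR_mulrn 2 (powR_ge0 a x)) -powRrM. Qed.

Lemma step k1 k2 (p1 p2 C1 C2 D1 D2 : R) :
  (0 < k1)%N -> (0 < k2)%N -> 1 <= p1 -> 1 <= p2 -> 0 < C1 -> 0 < C2 ->
  0 < D1 -> 0 < D2 ->
  lowb p1 k1 C1 D1 -> lowb p2 k2 C2 D2 ->
  exists C D, [/\ 0 < C, 0 < D & lowb ((1 + p1 + p2) / 2) (k1 + k2) C D].
Proof.
move=> k10 k20 p11 p21 C10 C20 D10 D20 IH1 IH2.
set P := (1 + p1 + p2) / 2.
set E := 2 * (p1 + p2) + 3 * (D1 + D2).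
set c0 := C1 * C2 / (4 * 2 `^ (p1 + p2) * 2 `^ (D1 + D2)).
have c00 : 0 < c0.
  by rewrite /c0 divr_gt0 ?mulr_gt0 ?powR_gt0 //; lra.
have P0 : 0 < P by rewrite /P; lra.
have E0 : 0 < E by rewrite /E; lra.
exists (Num.min (c0 `^ (2^-1)) (4 `^ P)^-1), (E / 2); split.
- by rewrite lt_min powR_gt0 // invr_gt0 powR_gt0.
- by rewrite divr_gt0.
set C := Num.min _ _.
have C0 : 0 <= C by apply/ltW; rewrite lt_min powR_gt0 // invr_gt0 powR_gt0.
move=> M A M0 Ap hP.
set n := (#|` A|)%:R.
have [nA0|nA] := eqVneq (#|` A|) 0%N.
  rewrite /n nA0 powR0 ?gt_eqF // mulr0.
  by apply: mulr_ge0; rewrite ?powR_ge0 ?ler0n.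
have nA' : (0 < #|` A|)%N by rewrite lt0n.
have M1 := M_ge1 Ap nA' hP.
have kA1 : 1 <= (#|` sumset (k1 + k2) A|)%:R :> R.
  by rewrite ler1n; apply: sumset_card_gt0.
have MD : 1 <= M `^ (E / 2).
  apply: (@le_trans _ _ (1 `^ (E / 2))); first by rewrite powR1.
  apply: ge0_ler_powR; rewrite ?nnegrE //; lra.
have [n4|n4] := ltP n 4.
  apply: (@le_trans _ _ 1).
    apply: (@le_trans _ _ ((4 `^ P)^-1 * 4 `^ P)); last first.
      by rewrite mulVf // gt_eqF // powR_gt0.
    apply: ler_pM => //; first by rewrite powR_ge0.
      by rewrite ge_min lexx orbT.
    by apply: ge0_ler_powR; rewrite ?nnegrE ?ler0n //; lra.
  apply: (@le_trans _ _ (1 * 1)); first by rewrite mulr1.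
  by apply: ler_pM.
have h := main_ineq k10 k20 (le_trans ler01 p11) (le_trans ler01 p21) C10 C20 IH1 IH2 M0 Ap hP n4.
rewrite -/n -/c0 -/E in h.
rewrite -ler_sqr ?nnegrE ?mulr_ge0 ?powR_ge0 ?ler0n //.
rewrite !exprMn !sqpow ?ler0n // ?(ltW M0) //.
have -> : P * 2 = 1 + p1 + p2 by rewrite /P; field.
have -> : E / 2 * 2 = E by field.
apply: le_trans h.
rewrite ler_wpM2r ?powR_ge0 //.
have : C ^+ 2 <= (c0 `^ (2^-1)) ^+ 2.
  by rewrite ler_sqr ?nnegrE ?powR_ge0 // ge_min lexx.
by rewrite sqpow ?(ltW c00) // mulVf // powRr1 // ltW.
Qed.

End L8.

Section L9.
Variable R : realType.

Lemma psi_good (Psi : nat -> R) : admissible_Psi Psi ->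
  forall k, (0 < k)%N -> 1 <= Psi k /\
    exists C D, [/\ 0 < C, 0 < D & lowb (Psi k) k C D].
Proof.
move=> [P1 Pk]; elim/ltn_ind => k IH k0.
have [k1|k2] := leqP k 1.
  have -> : k = 1%N by apply/eqP; rewrite eqn_leq k1.
  rewrite P1; split => //; exists 1, 1; split => // M A M0 Ap hP.
  rewrite sumset1 mul1r powRr1 ?ler0n // powRr1 ?(ltW M0) //.
  have [nA0|nA] := eqVneq (#|` A|) 0%N; first by rewrite nA0 mulr0.
  have M1 := M_ge1 Ap _ hP; rewrite lt0n in M1.
  by rewrite ler_peMl ?ler0n // M1.
have [a1 [a2 [a10 a20 a12 ->]]] := Pk k k2.
have [h1 [C1 [D1 [C10 D10 L1]]]] := IH a1 ltac:(lia) a10.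
have [h2 [C2 [D2 [C20 D20 L2]]]] := IH a2 ltac:(lia) a20.
split; first lra.
by rewrite -a12; apply: (@step R a1 a2 _ _ _ _ _ _ a10 a20 h1 h2 C10 C20 D10 D20 L1 L2).
Qed.

Fixpoint phi_f (f k : nat) : R :=
  match f with
  | 0%N => 1
  | f'.+1 => if (k <= 1)%N then 1
             else (1 + phi_f f' (k %/ 2)%N + phi_f f' (k - k %/ 2)%N) / 2
  end.

Definition Phi (k : nat) : R := phi_f k k.

Lemma phi_fuel f g k : (k <= f.+1)%N -> (k <= g.+1)%N -> phi_f f k = phi_f g k.
Proof.
elim: f g k => [|f IH] g k hf hg.
  by case: g hg => [|g] //= _; rewrite hf.
case: g hg => [|g] hg /=.
  by have -> : (k <= 1)%N by [].
case: ifP => // k1.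
by rewrite (IH g (k %/ 2)%N) 1?(IH g (k - k %/ 2)%N) //; lia.
Qed.

Lemma Phi_adm : admissible_Psi Phi.
Proof.
split; first by [].
move=> k k2; exists (k %/ 2)%N, (k - k %/ 2)%N; split; try lia.
rewrite /Phi; case: k k2 => [|k] k2 //=.
have -> : (k.+1 <= 1)%N = false by lia.
rewrite (phi_fuel k (k.+1 %/ 2)%N) ?(phi_fuel k (k.+1 - k.+1 %/ 2)%N) //; lia.
Qed.

Lemma Phi_bound k : (0 < k)%N -> ln ((2 * k + 2)%:R : R) <= Phi k * ln 4.
Proof.
have [P1 Pk] := Phi_adm.
elim/ltn_ind: k => k IH k0.
have [k1|k2] := leqP k 1.
  have -> : k = 1%N by apply/eqP; rewrite eqn_leq k1.
  by rewrite P1 mul1r.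
have e : Phi k = (1 + Phi (k %/ 2)%N + Phi (k - k %/ 2)%N) / 2.
  rewrite /Phi; case: k k2 {IH k0} => [|k] k2 //=.
  have -> : (k.+1 <= 1)%N = false by lia.
  by rewrite (phi_fuel k (k.+1 %/ 2)%N) ?(phi_fuel k (k.+1 - k.+1 %/ 2)%N) //; lia.
set a := (k %/ 2)%N; set b := (k - k %/ 2)%N.
have ha := IH a ltac:(lia) ltac:(lia).
have hb := IH b ltac:(lia) ltac:(lia).
have hn : ((2 * k + 2) ^ 2 <= 4 * (2 * a + 2) * (2 * b + 2))%N.
  have kab : k = (a + b)%N by lia.
  have [->|->] : b = a \/ b = a.+1 by lia.
    by rewrite kab; nia.
  by rewrite kab; nia.
have pos (m : nat) : 0 < ((2 * m + 2)%:R : R) by rewrite ltr0n; lia.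
have l4 : 0 < (4 : R) by [].
have hl : ln (((2 * k + 2) ^ 2)%:R : R) <= ln (((4 * (2 * a + 2) * (2 * b + 2))%N)%:R : R).
  by rewrite ler_ln ?posrE ?ltr0n ?ler_nat //; lia.
rewrite natrX lnXn // !natrM !lnM ?posrE ?mulr_gt0 // in hl.
rewrite e.
lra.
Qed.

End L9.

Local Open Scope ring_scope.
Local Open Scope fset_scope.

Theorem theorem1p2 (R : realType) (Psi : nat -> R) (hPsi : admissible_Psi Psi) :
  (forall k : nat, (2 <= k)%N ->
    exists C D : R, [/\ 0 < C, 0 < D &
      forall (M : R) (A : {fset R}), 0 < M -> (forall a, a \in A -> 0 < a) ->
        (#|` prodset A|%:R <= M * #|` A|%:R) ->
        C / M `^ D * #|` A|%:R `^ Psi k <= #|` sumset k A|%:R])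
  /\
  (forall k : nat, (2 <= k)%N ->
    exists C D : R, [/\ 0 < C, 0 < D &
      forall (M : R) (A : {fset R}), 0 < M -> (forall a, a \in A -> 0 < a) ->
        (#|` prodset A|%:R <= M * #|` A|%:R) ->
        C / M `^ D * #|` A|%:R `^ (ln (2 * k%:R) / ln 4) <= #|` sumset k A|%:R]).
Proof.
split.
  move=> k k2; have [_ [C [D [C0 D0 L]]]] := @psi_good R Psi hPsi k ltac:(lia).
  exists C, D; split => // M A M0 Ap hP.
  rewrite mulrAC ler_pdivrMr ?powR_gt0 // [X in _ <= X]mulrC.
  exact: L.
move=> k k2; have [_ [C [D [C0 D0 L]]]] := @psi_good R (Phi R) (Phi_adm R) k ltac:(lia).
exists C, D; split => // M A M0 Ap hP.
have h := L M A M0 Ap hP.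
apply: le_trans (_ : C / M `^ D * #|` A|%:R `^ (Phi R k) <= _).
  rewrite ler_wpM2l ?divr_ge0 ?powR_ge0 ?(ltW C0) //.
  have l4 : 0 < ln (4 : R) by apply: ln_gt0; lra.
  have k0 : 0 < (k%:R : R) by rewrite ltr0n; lia.
  have hk : ln (2 * k%:R) / ln 4 <= Phi R k.
    rewrite ler_pdivrMr //; apply: le_trans (Phi_bound R k ltac:(lia)).
    rewrite ler_ln ?posrE ?ltr0n ?mulr_gt0 //; last lia.
    by rewrite natrD natrM lerDl.
  have [nA0|nA] := eqVneq (#|` A|) 0%N.
    rewrite nA0 powR0 ?powR_ge0 //.
    have k2' : (2 : R) <= k%:R by rewrite ler_nat.
    by rewrite gt_eqF // divr_gt0 // ln_gt0 //; lra.
  apply: ler_powR => //; rewrite ler1n lt0n //.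
rewrite mulrAC ler_pdivrMr ?powR_gt0 // [X in _ <= X]mulrC.
exact: h.
Qed.
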